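(* For every $n\ge1$, the unimodal spi-logic $\mathsf{SPi}+\{\Diamond^n p\to q\}$ is complex, and hence complete, where $\Diamond^n$ denotes $n$ consecutive diamonds and $p,q$ are distinct variables.
   Context: Unimodal setting: one diamond $\Diamond$. Sp-formulas: built from propositional variables and $\top$ by $\wedge$ and $\Diamond$; sp-implications $\sigma\to\tau$. A SLO is an algebra $(A,\wedge,\top,\Diamond)$ with $(A,\wedge,\top)$ a meet-semilattice with top and $\Diamond$ monotone; it validates $\sigma\to\tau$ if $\sigma[\mathfrak a]\le\tau[\mathfrak a]$ for all valuations. Frames $(W,R)$ with standard Kripke semantics. $\mathsf{SPi}+\Sigma$ is the set of sp-implications valid in every SLO validating $\Sigma$; it is complete if it equals the set of sp-implications valid in every frame validating $\Sigma$. For a frame $\mathfrak F=(W,R)$, $\mathfrak F^\star=(2^W,\cap,W,\Diamond^+)$ with $\Diamond^+X=\{w\mid\exists v\in X,(w,v)\in R\}$; a spi-logic $L$ is complex if every SLO validating $L$ embeds (injectively, preserving $\wedge,\top,\Diamond$) into $\mathfrak F^\star$ for some frame $\mathfrak F$ validating $L$. *)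

(* Defs.v *)
Inductive spform : Type :=
| SVar : nat -> spform
| STop : spform
| SAnd : spform -> spform -> spform
| SDia : spform -> spform.

Definition spimp : Type := (spform * spform)%type.

Definition spiset : Type := spimp -> Prop.

Fixpoint dian (n : nat) (f : spform) : spform :=
  match n with
  | O => f
  | S m => SDia (dian m f)
  end.

Record SLO : Type := {
  carrier :> Type;
  smeet : carrier -> carrier -> carrier;
  stop : carrier;
  sdia : carrier -> carrier;
  smeetA : forall a b c, smeet a (smeet b c) = smeet (smeet a b) c;
  smeetC : forall a b, smeet a b = smeet b a;
  smeetxx : forall a, smeet a a = a;
  smeet_top : forall a, smeet a stop = a;
  sdia_mono : forall a b, smeet a b = a -> smeet (sdia a) (sdia b) = sdia a
}.

Definition sle (A : SLO) (a b : A) : Prop := smeet A a b = a.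

Fixpoint seval (A : SLO) (v : nat -> A) (f : spform) : A :=
  match f with
  | SVar i => v i
  | STop => stop A
  | SAnd f g => smeet A (seval A v f) (seval A v g)
  | SDia f => sdia A (seval A v f)
  end.

Definition slo_valid (A : SLO) (i : spimp) : Prop :=
  forall v : nat -> A, sle A (seval A v (fst i)) (seval A v (snd i)).

Definition slo_validates (A : SLO) (S : spiset) : Prop :=
  forall i, S i -> slo_valid A i.

Definition SPi (Sigma : spiset) : spiset :=
  fun i => forall A : SLO, slo_validates A Sigma -> slo_valid A i.

Record frame : Type := {
  world :> Type;
  rel : world -> world -> Prop
}.

Fixpoint ksat (F : frame) (V : nat -> F -> Prop) (f : spform) (w : F) : Prop :=
  match f with
  | SVar i => V i w
  | STop => True
  | SAnd f g => ksat F V f w /\ ksat F V g w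
  | SDia f => exists u, rel F w u /\ ksat F V f u
  end.

Definition frame_valid (F : frame) (i : spimp) : Prop :=
  forall (V : nat -> F -> Prop) (w : F), ksat F V (fst i) w -> ksat F V (snd i) w.

Definition frame_validates (F : frame) (S : spiset) : Prop :=
  forall i, S i -> frame_valid F i.

Definition complete (Sigma : spiset) : Prop :=
  forall i, SPi Sigma i <-> (forall F : frame, frame_validates F Sigma -> frame_valid F i).

(** An embedding of the SLO A into the complex algebra F* = (2^W, cap, W, Dia^+).
    Subsets of W are predicates W -> Prop, compared extensionally. *)
Definition embeds_into_complex (A : SLO) (F : frame) : Prop :=
  exists h : A -> F -> Prop,
    (forall a b, (forall w, h a w <-> h b w) -> a = b) /\
    (forall a b w, h (smeet A a b) w <-> (h a w /\ h b w)) /\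
    (forall w, h (stop A) w <-> True) /\
    (forall a w, h (sdia A a) w <-> exists u, rel F w u /\ h a u).

Definition complex (L : spiset) : Prop :=
  forall A : SLO, slo_validates A L ->
    exists F : frame, frame_validates F L /\ embeds_into_complex A F.

(** Sigma_n = { Dia^n p -> q } with p = variable 0, q = variable 1. *)
Definition Sigma_dia_n (n : nat) : spiset :=
  fun i => i = (dian n (SVar 0), SVar 1).

(* Main.v *)
Require Import Defs.
From Stdlib Require Import Classical FunctionalExtensionality PropExtensionality.

Section Gen.
Variable A : SLO.

Lemma sle_refl (a : A) : sle A a a.
Proof. apply smeetxx. Qed.

Lemma sle_trans (a b c : A) : sle A a b -> sle A b c -> sle A a c.
Proof. unfold sle; intros H1 H2. rewrite <- H1, <- smeetA, H2. reflexivity. Qed.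

Lemma sle_antisym (a b : A) : sle A a b -> sle A b a -> a = b.
Proof. unfold sle; intros H1 H2. rewrite <- H1, smeetC. exact H2. Qed.

Lemma meet_le_l (a b : A) : sle A (smeet A a b) a.
Proof. unfold sle. rewrite <- smeetA, (smeetC A b a), smeetA, smeetxx. reflexivity. Qed.

Lemma meet_le_r (a b : A) : sle A (smeet A a b) b.
Proof. rewrite smeetC. apply meet_le_l. Qed.

Lemma sle_meet (x a b : A) : sle A x (smeet A a b) <-> sle A x a /\ sle A x b.
Proof.
  split.
  - intros H; split; eapply sle_trans; try apply H; [apply meet_le_l | apply meet_le_r].
  - intros [H1 H2]; unfold sle in *. rewrite smeetA, H1, H2. reflexivity.
Qed.

Fixpoint iterD (m : nat) (x : A) : A :=
  match m with O => x | S k => sdia A (iterD k x) end.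

Lemma iterD_S_r m x : iterD (S m) x = iterD m (sdia A x).
Proof. induction m; simpl; auto. simpl in IHm. rewrite IHm. reflexivity. Qed.

Lemma seval_dian v m f : seval A v (dian m f) = iterD m (seval A v f).
Proof. induction m; simpl; auto. rewrite IHm; reflexivity. Qed.
End Gen.

Definition val2 (A : SLO) (a b : A) : nat -> A :=
  fun i => match i with O => a | _ => b end.

Lemma construct (n : nat) (A : SLO) : 1 <= n -> slo_validates A (Sigma_dia_n n) ->
  exists F : frame, frame_validates F (Sigma_dia_n n) /\ embeds_into_complex A F.
Proof.
  intros Hn HA.
  assert (Hv : forall a b : A, sle A (iterD A n a) b).
  { intros a b. specialize (HA _ eq_refl (val2 A a b)). simpl in HA.
    rewrite seval_dian in HA. exact HA. }
  set (bot := iterD A n (stop A)).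
  assert (Hbot : forall b, sle A bot b) by (intros; apply Hv).
  assert (Hit : forall a, iterD A n a = bot) by (intros; apply sle_antisym; auto).
  assert (Hdb : sdia A bot = bot).
  { unfold bot. change (sdia A (iterD A n (stop A))) with (iterD A (S n) (stop A)).
    rewrite iterD_S_r. apply Hit. }
  assert (Hlb : forall w, sle A w bot -> w = bot) by (intros; apply sle_antisym; auto).
  set (W := {x : A | x <> bot}).
  set (R := fun w u : W => sle A (proj1_sig w) (sdia A (proj1_sig u))).
  exists {| world := W; rel := R |}. split.
  - intros i Hi. rewrite Hi. intros V w. simpl.
    assert (K : forall m w, ksat {| world := W; rel := R |} V (dian (S m) (SVar 0)) w ->
                 exists u, sle A (proj1_sig w) (iterD A (S m) u)).
    { induction m; intros w0 Hk.
      - destruct Hk as [u [H3 _]]. exists (proj1_sig u); exact H3.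
      - destruct Hk as [u [H3 Hk]].
        destruct (IHm u Hk) as [u' Hu']. exists u'.
        eapply sle_trans; [exact H3|]. apply sdia_mono. exact Hu'. }
    destruct n as [|m]; [inversion Hn|].
    intros Hk. destruct (K m w Hk) as [u Hu]. rewrite Hit in Hu.
    exfalso. apply (proj2_sig w). apply Hlb. exact Hu.
  - exists (fun (a : A) (x : W) => sle A (proj1_sig x) a). simpl. split; [|split; [|split]].
    + intros a b H. apply sle_antisym.
      * destruct (classic (a = bot)) as [->|Ha]; auto.
        apply (proj1 (H (exist _ a Ha)) (sle_refl A a)).
      * destruct (classic (b = bot)) as [->|Hb]; auto.
        apply (proj2 (H (exist _ b Hb)) (sle_refl A b)).
    + intros a b w. apply sle_meet.
    + intros w. split; auto. intros _. unfold sle. apply smeet_top.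
    + intros a w. unfold R. split.
      * intros Hwa. assert (Ha : a <> bot).
        { intros ->. rewrite Hdb in Hwa. apply (proj2_sig w), Hlb, Hwa. }
        exists (exist _ a Ha). split; simpl; auto. apply sle_refl.
      * intros [u [H3 H4]].
        eapply sle_trans; [exact H3|]. apply sdia_mono, H4.
Qed.

Section Star.
Variable F : frame.

Definition Fstar : SLO.
Proof.
  refine {| carrier := F -> Prop;
            smeet := fun X Y w => X w /\ Y w;
            stop := fun _ => True;
            sdia := fun X w => exists u, rel F w u /\ X u |}.
  - intros; apply functional_extensionality; intros; apply propositional_extensionality; tauto.
  - intros; apply functional_extensionality; intros; apply propositional_extensionality; tauto.
  - intros; apply functional_extensionality; intros; apply propositional_extensionality; tauto.
  - intros; apply functional_extensionality; intros; apply propositional_extensionality; tauto.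
  - intros a b H; apply functional_extensionality; intros w; apply propositional_extensionality.
    split; [tauto|]. intros Hd; split; auto. destruct Hd as [u [Hu Hau]]. exists u; split; auto.
    pose proof (f_equal (fun X => X u) H) as E. simpl in E.
    rewrite <- E in Hau. destruct Hau; auto.
Defined.

Lemma seval_star V f w : seval Fstar V f w <-> ksat F V f w.
Proof.
  revert w; induction f; intros w; simpl; try tauto.
  - rewrite IHf1, IHf2; tauto.
  - split; intros [u [H1 H2]]; exists u; split; auto; apply IHf; auto.
Qed.

Lemma sle_star (X Y : Fstar) : sle Fstar X Y <-> (forall w, X w -> Y w).
Proof.
  unfold sle; simpl; split.
  - intros H w Xw. rewrite <- H in Xw. destruct Xw; auto.
  - intros H; apply functional_extensionality; intros w; apply propositional_extensionality.
    split; [tauto|]. intros; split; auto.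
Qed.

Lemma valid_star i : frame_valid F i <-> slo_valid Fstar i.
Proof.
  unfold frame_valid, slo_valid; split.
  - intros H v. apply sle_star. intros w. rewrite !seval_star. apply H.
  - intros H V w. specialize (H V). rewrite sle_star in H.
    intros Hk. apply seval_star, H, seval_star, Hk.
Qed.

Lemma validates_star S : frame_validates F S <-> slo_validates Fstar S.
Proof.
  unfold frame_validates, slo_validates; split; intros H i Hi; apply valid_star; auto.
Qed.
End Star.

Lemma embed_valid A F i : embeds_into_complex A F -> frame_valid F i -> slo_valid A i.
Proof.
  intros [h [Hinj [Hm [Ht Hd]]]] Hf v.
  set (V := fun k => h (v k)).
  assert (E : forall f w, h (seval A v f) w <-> ksat F V f w).
  { induction f; intros w; simpl.
    - tauto.
    - rewrite Ht; tauto.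
    - rewrite Hm, IHf1, IHf2; tauto.
    - rewrite Hd. split; intros [u [H1 H2]]; exists u; split; auto; apply IHf; auto. }
  unfold sle. apply Hinj. intros w. rewrite Hm. split; [tauto|].
  intros H; split; auto. apply E, Hf, E, H.
Qed.

Lemma SPi_sub S A : slo_validates A S -> slo_validates A (SPi S).
Proof. intros H i Hi. apply Hi, H. Qed.

Lemma SPi_sup S A : slo_validates A (SPi S) -> slo_validates A S.
Proof. intros H i Hi. apply H. intros B HB. apply HB, Hi. Qed.

Theorem theorem5p24 (n : nat) :
  1 <= n -> complex (SPi (Sigma_dia_n n)) /\ complete (Sigma_dia_n n).
Proof.
  intros Hn. split.
  - intros A HA. destruct (construct n A Hn (SPi_sup _ _ HA)) as [F [HF He]].
    exists F; split; auto. apply validates_star, SPi_sub, validates_star, HF.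
  - intros i. split.
    + intros Hi F HF. apply valid_star. apply Hi. apply validates_star, HF.
    + intros H A HA. destruct (construct n A Hn HA) as [F [HF He]].
      eapply embed_valid; eauto.
Qed.
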